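(* Let $\overline{C}(\alpha,N)$ be as defined in the context. Then: (1) For real $0\le\alpha\le2$ and integers $N\ge2$, $\overline{C}(\alpha,N)=\overline{C}(2-\alpha,N)\ge1$. (2) For real $0\le\alpha_1<\alpha_2\le2$, $0<\theta<1$ and positive integers $N$, $\overline{C}(\theta\alpha_1+(1-\theta)\alpha_2,N)\le\overline{C}(\alpha_1,N)^{\theta}\,\overline{C}(\alpha_2,N)^{1-\theta}$. (3) For real $0\le\alpha_1<\alpha_2\le1$ and positive integers $N$, $\overline{C}(\alpha_1,N)\ge\overline{C}(\alpha_2,N)$. (4) For real $0\le\alpha<\tfrac12$ there is a constant $c_\alpha>0$ such that $\overline{C}(\alpha,N)\ge c_\alpha N^{\frac12-\alpha}$ for all integers $N\ge2$.
   Context: For a strictly increasing sequence $(\lambda_k)_{k=-\infty}^{\infty}$ of real numbers, put $\delta_k:=\min\{\lambda_k-\lambda_{k-1},\lambda_{k+1}-\lambda_k\}$. For $0\le\alpha\le2$ and a positive integer $N$, let $\overline{C}(\alpha,N)$ be the minimum of all constants $C(\alpha,N)$ such that $$\sum_{m=1}^N\sum_{\substack{n=1\\ n\ne m}}^N\frac{\delta_m^{2-\alpha}\delta_n^{\alpha}t_mt_n}{(\lambda_m-\lambda_n)^2}\le C(\alpha,N)\sum_{n=1}^N t_n^2$$ holds for every strictly increasing real sequence $(\lambda_k)_{k\in\mathbb Z}$ and all nonnegative reals $t_1,\dots,t_N$. *)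

(* Defs.v *)
From HB Require Import structures.
From mathcomp Require Import all_boot all_order all_algebra.
From mathcomp Require Import all_classical all_reals all_analysis.
Set Implicit Arguments. Unset Strict Implicit. Unset Printing Implicit Defensive.
Import Order.TTheory GRing.Theory Num.Theory.
Local Open Scope ring_scope.
Local Open Scope classical_set_scope.

Section Defs.
Variable R : realType.

Definition strictly_increasing (lam : int -> R) : Prop :=
  forall i j : int, i < j -> lam i < lam j.

Definition delta (lam : int -> R) (k : int) : R :=
  Num.min (lam k - lam (k - 1)) (lam (k + 1) - lam k).

Definition lhs (alpha : R) (N : nat) (lam : int -> R) (t : nat -> R) : R :=
  \sum_(1 <= m < N.+1) \sum_(1 <= n < N.+1 | n != m)
     (delta lam m%:Z `^ (2 - alpha) * delta lam n%:Z `^ alpha * t m * t n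
       / (lam m%:Z - lam n%:Z) ^+ 2).

Definition admissible (alpha : R) (N : nat) (C : R) : Prop :=
  forall lam : int -> R, strictly_increasing lam ->
  forall t : nat -> R, (forall n, 0 <= t n) ->
  lhs alpha N lam t <= C * \sum_(1 <= n < N.+1) t n ^+ 2.

Definition Cbar (alpha : R) (N : nat) : R := inf [set C | admissible alpha N C].

End Defs.

(* Main.v *)
Require Import Defs.
From HB Require Import structures.
From mathcomp Require Import all_boot all_order all_algebra.
From mathcomp Require Import all_classical all_reals all_analysis.
From mathcomp Require Import ring lra zify.
Set Implicit Arguments. Unset Strict Implicit. Unset Printing Implicit Defensive.
Import Order.TTheory GRing.Theory Num.Theory.
Local Open Scope ring_scope.

Section S.
Variable R : realType.
Implicit Types (lam : int -> R) (t : nat -> R) (alpha : R).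

Definition term alpha lam t (m n : nat) : R :=
  delta lam m%:Z `^ (2 - alpha) * delta lam n%:Z `^ alpha * t m * t n
       / (lam m%:Z - lam n%:Z) ^+ 2.

Lemma lhsE alpha N lam t : lhs alpha N lam t =
  \sum_(1 <= m < N.+1) \sum_(1 <= n < N.+1 | n != m) term alpha lam t m n.
Proof. by []. Qed.

Lemma term_ge0 alpha lam t m n : (forall k, 0 <= t k) -> 0 <= term alpha lam t m n.
Proof.
move=> ht; rewrite /term divr_ge0 ?sqr_ge0 // !mulr_ge0 ?powR_ge0 //.
Qed.

Lemma lhs_ge0 alpha N lam t : (forall k, 0 <= t k) -> 0 <= lhs alpha N lam t.
Proof.
move=> ht; rewrite lhsE; apply: sumr_ge0 => m _; apply: sumr_ge0 => n _.
exact: term_ge0 ht.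
Qed.

Lemma term_sym alpha lam t m n : term (2 - alpha) lam t m n = term alpha lam t n m.
Proof.
rewrite /term opprB addrC subrK.
congr (_ / _); [ring | by rewrite -sqrrN opprB].
Qed.

Lemma lhs_sym alpha N lam t : lhs (2 - alpha) N lam t = lhs alpha N lam t.
Proof.
rewrite !lhsE.
under eq_bigr do rewrite big_mkcond.
rewrite exchange_big_nat /= big_mkcond /=.
apply: eq_bigr => m _; rewrite [RHS]big_mkcond; apply: eq_bigr => n _.
by rewrite eq_sym term_sym.
Qed.


Lemma sinc_le lam i j : strictly_increasing lam -> i <= j -> lam i <= lam j.
Proof.
move=> hl; rewrite le_eqVlt => /orP[/eqP -> // | /hl /ltW //].
Qed.

Lemma delta_gt0 lam k : strictly_increasing lam -> 0 < delta lam k.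
Proof.
move=> hl; rewrite /delta lt_min !subr_gt0 !hl //; lia.
Qed.

Lemma delta_le lam i j : strictly_increasing lam -> i != j ->
  delta lam i <= `|lam i - lam j|.
Proof.
move=> hl ij; have [lij|lji] : (i < j) \/ (j < i) by lia.
- rewrite distrC ger0_norm ?subr_ge0 ?sinc_le //; last by rewrite ltW.
  rewrite /delta ge_min; apply/orP; right; rewrite lerB // sinc_le //; lia.
- rewrite ger0_norm ?subr_ge0 ?sinc_le //; last by rewrite ltW.
  rewrite /delta ge_min; apply/orP; left; rewrite lerB // sinc_le //; lia.
Qed.

Lemma term_le alpha lam t m n : 0 <= alpha -> alpha <= 2 ->
  strictly_increasing lam -> (forall k, 0 <= t k) -> m != n ->
  term alpha lam t m n <= t m * t n.
Proof.
move=> a0 a2 hl ht mn.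
have mnZ : m%:Z != n%:Z by [].
set d := `|lam m%:Z - lam n%:Z|.
have d0 : 0 < d.
  rewrite normr_gt0 subr_eq0; apply/negP => /eqP e.
  have [l|l] : (m%:Z < n%:Z) \/ (n%:Z < m%:Z) by lia.
  - by have := hl _ _ l; rewrite e ltxx.
  - by have := hl _ _ l; rewrite e ltxx.
have dsq : (lam m%:Z - lam n%:Z) ^+ 2 = d ^+ 2 by rewrite /d real_normK ?num_real.
have h1 : delta lam m%:Z `^ (2 - alpha) <= d `^ (2 - alpha).
  apply: ge0_ler_powR; rewrite ?nnegrE ?subr_ge0 //.
  - exact/ltW/delta_gt0.
  - exact/ltW.
  - exact: delta_le.
have h2 : delta lam n%:Z `^ alpha <= d `^ alpha.
  apply: ge0_ler_powR; rewrite ?nnegrE //.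
  - exact/ltW/delta_gt0.
  - exact/ltW.
  rewrite /d distrC; apply: delta_le => //; by rewrite eq_sym.
have hA : delta lam m%:Z `^ (2 - alpha) * delta lam n%:Z `^ alpha <= d ^+ 2.
  apply: le_trans (ler_pM _ _ h1 h2) _; rewrite ?powR_ge0 //.
  rewrite -powRD; last by apply/implyP => _; rewrite gt_eqF.
  by rewrite subrK powR_mulrn // ltW.
rewrite /term dsq.
have -> : forall a b c e : R, a * b * c / e = a / e * (b * c) by move=> *; ring.
apply: ler_piMl; first by rewrite mulr_ge0.
by rewrite ler_pdivrMr ?mul1r // exprn_gt0.
Qed.

Lemma adm_exists alpha N : 0 <= alpha -> alpha <= 2 ->
  admissible alpha N (2 * N%:R).
Proof.
move=> a0 a2 lam hl t ht; rewrite lhsE.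
apply: (@le_trans _ _ (\sum_(1 <= m < N.+1) \sum_(1 <= n < N.+1) (t m ^+ 2 + t n ^+ 2))).
  apply: ler_sum => m _; rewrite [X in _ <= X](bigID (fun n => n != m)) /=.
  apply: ler_wpDr; first by apply: sumr_ge0 => n _; rewrite addr_ge0 ?sqr_ge0.
  apply: ler_sum => n nm; apply: le_trans (term_le _ _ _ _ _) _ => //.
    by rewrite eq_sym.
  have := ht m; have := ht n; nra.
under eq_bigr do rewrite big_split /= sumr_const_nat.
rewrite big_split /= sumr_const_nat subSS subn0.
under eq_bigr do rewrite -mulr_natr.
rewrite -big_distrl /= -mulr_natr; lra.
Qed.

Lemma adm_ge0 alpha N C : (0 < N)%N -> admissible alpha N C -> 0 <= C.
Proof.
move=> N0 H.
have hl : strictly_increasing (fun k : int => k%:~R : R).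
  by move=> i j ij; rewrite ltr_int.
have := H _ hl (fun _ => 1) (fun _ => ler01).
rewrite sumr_const_nat subSS subn0 expr1n => H'.
have := le_trans (lhs_ge0 _ _ _ (fun _ => ler01)) H'.
by rewrite pmulr_lge0 // ltr0n.
Qed.

Lemma Cbar_le alpha N C : (0 < N)%N -> admissible alpha N C -> Cbar alpha N <= C.
Proof.
move=> N0 H; apply: ge_inf => //; exists 0 => D /= HD.
exact: adm_ge0 HD.
Qed.

Lemma Cbar_adm alpha N : 0 <= alpha -> alpha <= 2 -> (0 < N)%N ->
  admissible alpha N (Cbar alpha N).
Proof.
move=> a0 a2 N0 lam hl t ht.
set S := \sum_(1 <= n < N.+1) t n ^+ 2.
have S0 : 0 <= S by apply: sumr_ge0 => n _; exact: sqr_ge0.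
move: S0; rewrite le_eqVlt => /orP[/eqP S0 | S0].
  have := adm_exists N a0 a2 hl ht; rewrite -/S -S0 !mulr0 //.
rewrite -ler_pdivrMr //; apply: lb_le_inf.
  by exists (2 * N%:R); exact: adm_exists.
by move=> C /= HC; rewrite ler_pdivrMr //; exact: HC.
Qed.

Lemma Cbar_sym alpha N : Cbar (2 - alpha) N = Cbar alpha N.
Proof.
rewrite /Cbar; congr inf; apply/seteqP; split => C /= H lam hl t ht.
- by rewrite -lhs_sym; exact: H.
- by rewrite lhs_sym; exact: H.
Qed.

Lemma powRD_pos (x r s : R) : 0 < x -> x `^ (r + s) = x `^ r * x `^ s.
Proof. by move=> x0; rewrite powRD //; apply/implyP => _; rewrite gt_eqF. Qed.

Lemma amgm (x y th : R) : 0 <= x -> 0 <= y -> 0 < th -> th < 1 ->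
  x `^ th * y `^ (1 - th) <= th * x + (1 - th) * y.
Proof.
move=> x0 y0 t0 t1.
have t1' : 0 < 1 - th by rewrite subr_gt0.
have := @conjugate_powR _ (x `^ th) (y `^ (1 - th)) th^-1 (1 - th)^-1
  (powR_ge0 _ _) (powR_ge0 _ _).
rewrite !invr_gt0 !invrK => /(_ t0 t1'); rewrite subrKC => /(_ erefl).
rewrite -!powRrM !divff ?gt_eqF // !powRr1 //.
by rewrite [x * _]mulrC [y * _]mulrC.
Qed.

Lemma holder (I : eqType) (r : seq I) (P : pred I) (F G : I -> R) (th : R) :
  0 < th -> th < 1 -> (forall i, 0 <= F i) -> (forall i, 0 <= G i) ->
  \sum_(i <- r | P i) F i `^ th * G i `^ (1 - th) <=
  (\sum_(i <- r | P i) F i) `^ th * (\sum_(i <- r | P i) G i) `^ (1 - th).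
Proof.
move=> t0 t1 F0 G0.
have t1' : 0 < 1 - th by rewrite subr_gt0.
set X := \sum_(i <- r | P i) F i; set Y := \sum_(i <- r | P i) G i.
have X0 : 0 <= X by apply: sumr_ge0.
have Y0 : 0 <= Y by apply: sumr_ge0.
move: X0; rewrite le_eqVlt => /orP[/eqP X0 | X0].
  rewrite big1_seq ?mulr_ge0 ?powR_ge0 // => i /andP[Pi ir].
  have /allP H : all (fun i => P i ==> (F i == 0)) r.
    rewrite -psumr_eq0; [exact/eqP | by move=> j _; exact: F0].
  have /implyP/(_ Pi)/eqP -> := H i ir.
  by rewrite powR0 ?gt_eqF ?mul0r.
move: Y0; rewrite le_eqVlt => /orP[/eqP Y0 | Y0].
  rewrite big1_seq ?mulr_ge0 ?powR_ge0 // => i /andP[Pi ir].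
  have /allP H : all (fun i => P i ==> (G i == 0)) r.
    rewrite -psumr_eq0; [exact/eqP | by move=> j _; exact: G0].
  have /implyP/(_ Pi)/eqP -> := H i ir.
  by rewrite powR0 ?gt_eqF ?mulr0.
set K := X `^ th * Y `^ (1 - th).
have XK : 0 < X `^ th by rewrite powR_gt0.
have YK : 0 < Y `^ (1 - th) by rewrite powR_gt0.
have eq1 : forall i, F i `^ th * G i `^ (1 - th) =
    K * ((F i / X) `^ th * (G i / Y) `^ (1 - th)).
  move=> i; rewrite !powRM ?invr_ge0 ?F0 ?G0 ?(ltW X0) ?(ltW Y0) //.
  rewrite -!powR_inv1 ?(ltW X0) ?(ltW Y0) // -!powRrM !mulN1r !powRN /K.
  by field; rewrite !gt_eqF.
under eq_bigr do rewrite eq1.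
rewrite -big_distrr /= ger_pMr ?mulr_gt0 //.
apply: le_trans (ler_sum _ (fun i _ => amgm (divr_ge0 (F0 i) (ltW X0))
   (divr_ge0 (G0 i) (ltW Y0)) t0 t1)) _.
rewrite big_split /= -!big_distrr /= -!big_distrl /= -/X -/Y.
by rewrite !divff ?gt_eqF // !mulr1 subrKC.
Qed.

Lemma term_mix a1 a2 th lam t m n : strictly_increasing lam ->
  (forall k, 0 <= t k) -> 0 < th -> th < 1 ->
  term (th * a1 + (1 - th) * a2) lam t m n =
  term a1 lam t m n `^ th * term a2 lam t m n `^ (1 - th).
Proof.
move=> hl ht t0 t1.
set c := t m * t n / (lam m%:Z - lam n%:Z) ^+ 2.
have c0 : 0 <= c by rewrite /c divr_ge0 ?sqr_ge0 // mulr_ge0.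
have tE : forall a, term a lam t m n =
    (delta lam m%:Z `^ (2 - a) * delta lam n%:Z `^ a) * c.
  by move=> a; rewrite /term /c; ring.
have dm := delta_gt0 m%:Z hl; have dn := delta_gt0 n%:Z hl.
clearbody c.
rewrite !tE !powRM ?mulr_ge0 ?powR_ge0 // -!powRrM.
have e1 : 2 - (th * a1 + (1 - th) * a2) = (2 - a1) * th + (2 - a2) * (1 - th)
  by ring.
have e2 : th * a1 + (1 - th) * a2 = a1 * th + a2 * (1 - th) by ring.
have cE : c `^ th * c `^ (1 - th) = c.
  by rewrite -powRD ?subrKC ?powRr1 //; apply/implyP; rewrite oner_eq0.
rewrite e1 e2 (powRD_pos _ _ dm) (powRD_pos _ _ dn) -[c in LHS]cE.
ring.
Qed.

Lemma lhs_mix a1 a2 th N lam t : strictly_increasing lam ->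
  (forall k, 0 <= t k) -> 0 < th -> th < 1 ->
  lhs (th * a1 + (1 - th) * a2) N lam t <=
  lhs a1 N lam t `^ th * lhs a2 N lam t `^ (1 - th).
Proof.
move=> hl ht t0 t1; rewrite !lhsE.
under eq_bigr do under eq_bigr do rewrite term_mix //.
apply: le_trans (ler_sum _ (fun m _ => holder _ _ t0 t1 _ _)) _.
- by move=> m _ n; exact: term_ge0 ht.
- by move=> m _ n; exact: term_ge0 ht.
apply: holder => // m; apply: sumr_ge0 => n _; exact: term_ge0 ht.
Qed.

Lemma Cbar_ge0 alpha N : 0 <= alpha -> alpha <= 2 -> (0 < N)%N -> 0 <= Cbar alpha N.
Proof. by move=> a0 a2 N0; apply: adm_ge0 N0 (Cbar_adm a0 a2 N0). Qed.

Lemma part2 (a1 a2 th : R) (N : nat) : 0 <= a1 -> a1 < a2 -> a2 <= 2 ->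
     0 < th -> th < 1 -> (0 < N)%N ->
     Cbar (th * a1 + (1 - th) * a2) N <=
       Cbar a1 N `^ th * Cbar a2 N `^ (1 - th).
Proof.
move=> a10 a12 a22 t0 t1 N0.
have a1' : a1 <= 2 by apply: le_trans a22; exact: ltW.
have a2' : 0 <= a2 by apply: le_trans a10 _; exact: ltW.
apply: Cbar_le => // lam hl t ht.
set S := \sum_(1 <= n < N.+1) t n ^+ 2.
have S0 : 0 <= S by apply: sumr_ge0 => n _; exact: sqr_ge0.
apply: le_trans (lhs_mix _ _ _ hl ht t0 t1) _.
have C10 := Cbar_ge0 a10 a1' N0; have C20 := Cbar_ge0 a2' a22 N0.
have L1 := Cbar_adm a10 a1' N0 hl ht; have L2 := Cbar_adm a2' a22 N0 hl ht.
rewrite -/S in L1 L2.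
have P1 : lhs a1 N lam t `^ th <= (Cbar a1 N * S) `^ th.
  by apply: ge0_ler_powR => //; [exact: ltW | rewrite nnegrE lhs_ge0 | rewrite nnegrE mulr_ge0].
have P2 : lhs a2 N lam t `^ (1 - th) <= (Cbar a2 N * S) `^ (1 - th).
  by apply: ge0_ler_powR => //; [rewrite subr_ge0 ltW | rewrite nnegrE lhs_ge0 | rewrite nnegrE mulr_ge0].
apply: le_trans (ler_pM (powR_ge0 _ _) (powR_ge0 _ _) P1 P2) _.
have SE : S `^ th * S `^ (1 - th) = S.
  by rewrite -powRD ?subrKC ?powRr1 //; apply/implyP; rewrite oner_eq0.
rewrite le_eqVlt; apply/orP; left; apply/eqP. rewrite (powRM _ C10) // (powRM _ C20) //. by rewrite mulrACA SE.
Qed.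

Lemma part3 (a1 a2 : R) (N : nat) : 0 <= a1 -> a1 < a2 -> a2 <= 1 -> (0 < N)%N ->
     Cbar a2 N <= Cbar a1 N.
Proof.
move=> a10 a12 a21 N0.
set th := (2 - a1 - a2) / (2 - 2 * a1).
have den : 0 < 2 - 2 * a1 by lra.
have t0 : 0 < th by rewrite /th divr_gt0 //; lra.
have t1 : th < 1 by rewrite /th ltr_pdivrMr // mul1r; lra.
have := @part2 a1 (2 - a1) th N a10 ltac:(lra) ltac:(lra) t0 t1 N0.
have -> : th * a1 + (1 - th) * (2 - a1) = a2.
  rewrite /th; field; lra.
rewrite Cbar_sym -powRD ?subrKC ?powRr1 //.
  by apply: Cbar_ge0 => //; lra.
by apply/implyP; rewrite ?subrKC oner_eq0.
Qed.

Definition lamD (D : R) (k : int) : R :=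
  k%:~R + D * ((1 <= k)%R)%:R + D * ((2 <= k)%R)%:R.

Lemma ind_le (c i j : int) : i <= j ->
  (0 : R) <= (((c <= j)%R)%:R : R) - (((c <= i)%R)%:R : R) <= 1.
Proof.
move=> ij; have [h|h] := boolP (c <= i).
  have -> : (c <= j) = true by apply: le_trans ij.
  by rewrite subrr lexx ler01.
rewrite subr0; case: (c <= j); rewrite /= ?lexx ?ler01 //.
Qed.

Lemma lamD_diff D (i j : int) : 0 <= D -> i <= j ->
  (j - i)%:~R <= lamD D j - lamD D i <= (j - i)%:~R + 2 * D.
Proof.
move=> D0 ij.
have /andP[a1 b1] := ind_le 1 ij; have /andP[a2 b2] := ind_le 2 ij.
have -> : lamD D j - lamD D i = (j - i)%:~R +
   D * ((((1 <= j)%R)%:R : R) - (((1 <= i)%R)%:R : R)) + D * ((((2 <= j)%R)%:R : R) - (((2 <= i)%R)%:R : R)).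
  by rewrite /lamD intrB; ring.
set u := (_ - _ : R) in a1 b1 *; set v := (_ - _ : R) in a2 b2 *.
by apply/andP; split; nra.
Qed.

Lemma lamD_inc D : 0 <= D -> strictly_increasing (lamD D).
Proof.
move=> D0 i j ij; have /andP[h _] := lamD_diff D0 (ltW ij).
rewrite -subr_gt0; apply: lt_le_trans h; rewrite ltr0z subr_gt0 //.
Qed.

Lemma lamD_delta D k : 0 <= D -> 1 <= delta (lamD D) k.
Proof.
move=> D0; rewrite /delta le_min.
have h1 : k - 1 <= k by lia.
have h2 : k <= k + 1 by lia.
have /andP[a _] := lamD_diff D0 h1; have /andP[b _] := lamD_diff D0 h2.
have e1 : k - (k - 1) = 1 by ring.
have e2 : k + 1 - k = 1 by ring.
by rewrite e1 in a; rewrite e2 in b; rewrite a b.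
Qed.

Lemma lamD0 D : lamD D (Posz 0) = 0.
Proof. by rewrite /lamD /= !mulr0 !addr0. Qed.
Lemma lamD1 D : lamD D (Posz 1) = 1 + D.
Proof. by rewrite /lamD /= mulr1 mulr0 addr0. Qed.
Lemma lamDn D (n : nat) : (2 <= n)%N -> lamD D n%:Z = n%:R + 2 * D.
Proof.
move=> n2; rewrite /lamD.
have -> : (1 <= n%:Z) = true by lia.
have -> : (2 <= n%:Z) = true by lia.
rewrite /= !mulr1; change ((n%:Z)%:~R : R) with (n%:R : R); ring.
Qed.
Lemma lamD_delta1 D : 0 <= D -> 1 + D <= delta (lamD D) (Posz 1).
Proof.
move=> D0; rewrite /delta le_min.
have -> : Posz 1 - 1 = Posz 0 by []. have -> : Posz 1 + 1 = Posz 2 by [].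
rewrite lamD0 lamD1 lamDn //; apply/andP; split; lra.
Qed.

Lemma term_lb alpha lam t m n (A B : R) : 0 <= alpha -> alpha <= 2 ->
  strictly_increasing lam -> (forall k, 0 <= t k) ->
  0 < A -> A <= delta lam m%:Z -> 1 <= delta lam n%:Z ->
  0 < `|lam m%:Z - lam n%:Z| <= B ->
  A `^ (2 - alpha) * (t m * t n) / B ^+ 2 <= term alpha lam t m n.
Proof.
move=> a0 a2 hl ht A0 Am Bn /andP[d0 dB].
have h1 : A `^ (2 - alpha) <= delta lam m%:Z `^ (2 - alpha).
  by apply: ge0_ler_powR; rewrite ?nnegrE ?subr_ge0 // ltW // (lt_le_trans A0).
have h2 : 1 <= delta lam n%:Z `^ alpha.
  have := @ge0_ler_powR _ alpha a0 1 (delta lam n%:Z).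
  by rewrite powR1 /=; apply; rewrite ?nnegrE // (le_trans ler01).
have tt0 : 0 <= t m * t n by rewrite mulr_ge0.
have dsq : (lam m%:Z - lam n%:Z) ^+ 2 = `|lam m%:Z - lam n%:Z| ^+ 2
  by rewrite real_normK ?num_real.
rewrite /term dsq.
have -> : forall a b c e f : R, a * b * c * e / f = a * b * (c * e) / f
  by move=> *; ring.
apply: ler_pM.
- by rewrite mulr_ge0 ?powR_ge0.
- by rewrite invr_ge0 sqr_ge0.
- apply: ler_wpM2r => //; apply: le_trans h1 _.
  by rewrite -[X in X <= _]mulr1 ler_wpM2l ?powR_ge0.
- rewrite lef_pV2 ?posrE ?exprn_gt0 //; last by apply: lt_le_trans dB.
  rewrite lerXn2r // nnegrE ?(ltW d0) ?(ltW (lt_le_trans d0 dB)) //.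
Qed.

Lemma seq_ge_one (r : seq nat) (Q : pred nat) (G : nat -> R) k :
  k \in r -> uniq r -> Q k -> (forall i, 0 <= G i) ->
  G k <= \sum_(i <- r | Q i) G i.
Proof.
move=> kr ur Qk G0; rewrite big_mkcond (bigD1_seq k) //= Qk lerDl.
by apply: sumr_ge0 => i _; case: (Q i).
Qed.

Lemma sum_ge_two (G : nat -> R) a b k1 k2 (P : pred nat) :
  (a <= k1 < b)%N -> (a <= k2 < b)%N -> k1 != k2 -> P k1 -> P k2 ->
  (forall i, 0 <= G i) ->
  G k1 + G k2 <= \sum_(a <= i < b | P i) G i.
Proof.
move=> h1 h2 k12 P1 P2 G0.
rewrite big_mkcond (bigD1_seq k1); last exact: iota_uniq.
2: by rewrite mem_index_iota.
rewrite /= P1 lerD2l.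
have := @seq_ge_one (index_iota a b) (fun i => i != k1) (fun i => if P i then G i else 0) k2.
rewrite P2; apply; first by rewrite mem_index_iota.
- exact: iota_uniq.
- by rewrite eq_sym.
by move=> i; case: (P i).
Qed.


Lemma part1_lb alpha N C : 0 <= alpha -> alpha <= 2 -> (2 <= N)%N ->
  admissible alpha N C -> 1 <= C.
Proof.
move=> a0 a2 N2 HC.
have hl := lamD_inc (lexx (0 : R)).
set t := fun n : nat => (((n == 1%N) || (n == 2%N)) %:R : R).
have ht : forall k, 0 <= t k by move=> k; rewrite /t ler0n.
have := HC _ hl t ht.
have m1 : 1%N \in index_iota 1 N.+1 by rewrite mem_index_iota; lia.
have m2 : 2%N \in index_iota 1 N.+1 by rewrite mem_index_iota; lia.
have -> : \sum_(1 <= n < N.+1) t n ^+ 2 = 2.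
  rewrite (bigD1_seq 1%N m1 (iota_uniq _ _)) /=.
  rewrite big_mkcond (bigD1_seq 2%N m2 (iota_uniq _ _)) /=.
  have -> : \sum_(1 <= i < N.+1 | i != 2%N) (if i != 1%N then t i ^+ 2 else 0) = 0.
    apply: big1 => i i2; case: ifP => // i1; rewrite /t (negbTE i1) (negbTE i2) /=.
    by rewrite expr0n.
  by rewrite addr0 /t /= expr1n.
move=> H.
have C0 := adm_ge0 (leq_trans (isT : (0 < 2)%N) N2) HC.
suff : 2 <= lhs alpha N (lamD 0) t by lra.
have T : forall m n : nat, (m == 1%N) && (n == 2%N) || (m == 2%N) && (n == 1%N) ->
    1 <= term alpha (lamD 0) t m n.
  move=> m n hmn.
  have := @term_lb alpha (lamD 0) t m n 1 1 a0 a2 hl ht ltr01.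
  rewrite powR1 /= mul1r expr1n divr1.
  have -> : t m * t n = 1.
    by case/orP: hmn => /andP[/eqP -> /eqP ->]; rewrite /t /= mulr1.
  apply; first exact: lamD_delta.
  - exact: lamD_delta.
  have e : (2 : R) - 1 = 1 by lra.
  case/orP: hmn => /andP[/eqP -> /eqP ->]; rewrite lamD1 lamDn // !mulr0 !addr0;
    by rewrite ?[`|1 - 2|]distrC e normr1 ltr01 lexx.
rewrite lhsE.
have h1 : (1 <= 1 < N.+1)%N by lia.
have h2 : (1 <= 2 < N.+1)%N by lia.
apply: le_trans (sum_ge_two h1 h2 (isT : (1 != 2)%N) isT isT _).
  2: by move=> i; apply: sumr_ge0 => n _; exact: term_ge0.
have -> : (2 : R) = 1 + 1 by lra.
apply: lerD.
- apply: le_trans (seq_ge_one (k := 2%N) m2 (iota_uniq _ _) isT _).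
  + exact: T.
  + by move=> i; exact: term_ge0.
- apply: le_trans (seq_ge_one (k := 1%N) m1 (iota_uniq _ _) isT _).
  + exact: T.
  + by move=> i; exact: term_ge0.
Qed.

Lemma part4_lb alpha N C : 0 <= alpha -> alpha <= 2 -> (2 <= N)%N ->
  admissible alpha N C -> N%:R `^ (1 / 2 - alpha) / 16 <= C.
Proof.
move=> a0 a2 N2 HC.
have N0 : (0 : R) < N%:R by rewrite ltr0n; lia.
have N2R : (2 : R) <= N%:R by rewrite ler_nat.
set D : R := N%:R - 1.
have D0 : 0 <= D by rewrite /D; lra.
have hl := lamD_inc D0.
set s : R := N%:R `^ (1 / 2).
have s0 : 0 <= s by exact: powR_ge0.
have s2 : s ^+ 2 = N%:R.
  by rewrite /s -powR_mulrn ?powR_ge0 // -powRrM (_ : 1 / 2 * 2 = 1) ?powRr1 ?ltW //; field.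
set t := fun n : nat => if n == 1%N then s else 1.
have ht : forall k, 0 <= t k by move=> k; rewrite /t; case: ifP.
have H := HC _ hl t ht.
have C0 := adm_ge0 (leq_trans (isT : (0 < 2)%N) N2) HC.
set S := \sum_(1 <= n < N.+1) t n ^+ 2 in H.
have SN : S <= 2 * N%:R.
  rewrite /S big_ltn; last by lia.
  have -> : \sum_(2 <= n < N.+1) t n ^+ 2 = \sum_(2 <= n < N.+1) (1 : R).
    by apply: eq_big_nat => n /andP[n2 _]; rewrite /t ifF ?expr1n //; apply/eqP; lia.
  rewrite sumr_const_nat /t /= s2.
  have : ((N.+1 - 2)%N%:R : R) <= N%:R by rewrite ler_nat; lia.
  lra.
set K : R := N%:R `^ (2 - alpha) * (s * 1) / (2 * N%:R) ^+ 2.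
have K0 : 0 <= K by rewrite /K divr_ge0 ?sqr_ge0 // mulr_ge0 ?powR_ge0 ?mulr1.
have LK : K * (N%:R - 1) <= lhs alpha N (lamD D) t.
  rewrite lhsE.
  have m1 : 1%N \in index_iota 1 N.+1 by rewrite mem_index_iota; lia.
  apply: le_trans (seq_ge_one (k := 1%N) m1 (iota_uniq _ _) isT _); last first.
    by move=> i; apply: sumr_ge0 => n _; exact: term_ge0.
  rewrite big_ltn_cond /=; last by lia.
  have -> : \sum_(2 <= n < N.+1 | n != 1%N) term alpha (lamD D) t 1 n =
            \sum_(2 <= n < N.+1) term alpha (lamD D) t 1 n.
    rewrite big_mkcond; apply: eq_big_nat => n /andP[n2 _].
    by rewrite ifT //; apply/eqP; lia.
  have -> : K * (N%:R - 1) = \sum_(2 <= n < N.+1) K.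
    rewrite sumr_const_nat -[K *+ _]mulr_natr; congr (_ * _).
    by rewrite subSS natrB; last by lia.
  apply: ler_sum_nat => n /andP[n2 nN].
  have := @term_lb alpha (lamD D) t 1 n N%:R (2 * N%:R) a0 a2 hl ht N0.
  rewrite /K /t /=.
  have -> : (n == 1%N) = false by apply/eqP; lia.
  apply.
  - by apply: le_trans (lamD_delta1 D0); rewrite /D; lra.
  - exact: lamD_delta.
  rewrite lamD1 lamDn //.
  have nR : (n%:R : R) <= N%:R by rewrite ler_nat; lia.
  have n2R : (2 : R) <= n%:R by rewrite ler_nat.
  rewrite distrC ger0_norm; last by rewrite /D; lra.
  by apply/andP; split; rewrite /D; lra.
have P0 : 0 <= N%:R `^ (1 / 2 - alpha) by exact: powR_ge0.
have KP : K = N%:R `^ (1 / 2 - alpha) / 4.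
  rewrite /K /s mulr1.
  have E : N%:R `^ (1 / 2 - alpha) * N%:R `^ 2 = N%:R `^ (2 - alpha) * N%:R `^ (1 / 2).
    by rewrite -!powRD_pos //; congr (_ `^ _); ring.
  rewrite -E powR_mulrn ?ltW //.
  field; rewrite gt_eqF // exprn_gt0 //.
rewrite KP in LK.
have := le_trans LK H.
set P := N%:R `^ (1 / 2 - alpha) in P0 *.
move=> HH.
have CS : C * S <= C * (2 * N%:R) by rewrite ler_wpM2l.
nra.
Qed.

End S.

Unset Implicit Arguments.


Theorem proposition3 (R : realType) :
  (forall (alpha : R) (N : nat), 0 <= alpha -> alpha <= 2 -> (2 <= N)%N ->
     Cbar alpha N = Cbar (2 - alpha) N /\ 1 <= Cbar alpha N) /\
  (forall (a1 a2 th : R) (N : nat), 0 <= a1 -> a1 < a2 -> a2 <= 2 ->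
     0 < th -> th < 1 -> (0 < N)%N ->
     Cbar (th * a1 + (1 - th) * a2) N <=
       Cbar a1 N `^ th * Cbar a2 N `^ (1 - th)) /\
  (forall (a1 a2 : R) (N : nat), 0 <= a1 -> a1 < a2 -> a2 <= 1 -> (0 < N)%N ->
     Cbar a2 N <= Cbar a1 N) /\
  (forall alpha : R, 0 <= alpha -> alpha < 1 / 2 ->
     exists c : R, 0 < c /\
       forall N : nat, (2 <= N)%N -> c * N%:R `^ (1 / 2 - alpha) <= Cbar alpha N).
Proof.
split.
  move=> alpha N a0 a2 N2; split; first by rewrite Cbar_sym.
  apply: lb_le_inf; first by exists (2 * N%:R); exact: adm_exists.
  by move=> C HC; exact: part1_lb a0 a2 N2 HC.
split; first exact: part2.
split; first exact: part3.
move=> alpha a0 a1; exists (1 / 16); split; first lra.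
move=> N N2.
have a2 : alpha <= 2 by lra.
apply: lb_le_inf; first by exists (2 * N%:R); exact: adm_exists.
move=> C HC; have := part4_lb a0 a2 N2 HC; lra.
Qed.
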